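(* Let $w_0\to w_1\to\dots\to w_t$ be a reduced computation (as defined in the context). If $|w_0|_{\mathcal{A}}<|w_1|_{\mathcal{A}}$, then $|w_{i-1}|_{\mathcal{A}}\le|w_i|_{\mathcal{A}}$ for all $1\le i\le t$.
   Context: Let $\mathcal{A}$ be a finite non-empty alphabet, $\mathcal{A}_1=\{a_1:a\in\mathcal{A}\}$ a disjoint copy of $\mathcal{A}$, and $\mathcal{B}=\{b_1,b_2\}$; let $F=F(\mathcal{A}_1\sqcup\mathcal{B})$ be the free group, whose elements are identified with reduced words. Let $D=4|\mathcal{A}|(|\mathcal{A}|+2)$, fix a bijection $\eta:(\mathcal{A}\sqcup\mathcal{B})\times\mathcal{A}\to\{1,\dots,D/4\}$, and for $y\in\mathcal{A}\sqcup\mathcal{B}$, $a\in\mathcal{A}$, with $k=\eta(y,a)$, put $v(y,a)=b_1^k(b_2b_1)^{D-2k}b_2^k$. For $y\in\mathcal{A}\sqcup\mathcal{B}$ let $\psi_y$ be the automorphism of $F$ fixing $b_1,b_2$ and sending $a_1\mapsto v(y,a)a_1$ for each $a\in\mathcal{A}$; let $u_y=b_i^{-1}$ if $y=b_i$ and $u_y=a_1^{-1}$ if $y=a\in\mathcal{A}$. For each $y$ there are two operations (''rules'') $\theta_y,\theta_y^{-1}$ on $F$: $w\cdot\theta_y=\psi_y(w)u_y$ and $w\cdot\theta_y^{-1}=\psi_y^{-1}(wu_y^{-1})$ (products freely reduced); these are mutually inverse. A computation is a sequence $w_0,\dots,w_t\in F$ with $w_i=w_{i-1}\cdot\theta_{y_i}^{\varepsilon_i}$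 for some $y_i\in\mathcal{A}\sqcup\mathcal{B}$, $\varepsilon_i\in\{\pm1\}$; its history is the word $\theta_{y_1}^{\varepsilon_1}\cdots\theta_{y_t}^{\varepsilon_t}$, and the computation is reduced if this word is freely reduced (no consecutive $\theta_y^{\varepsilon}\theta_y^{-\varepsilon}$). (This describes computations of the machine $\mathbf{M}_1^{\mathcal{A}}$ in the base $Q_0Q_1$, with configuration $q_0wq_1$ identified with $w$.) For $w\in F$, $|w|_{\mathcal{A}}$ is the number of letters of $w$ from $\mathcal{A}_1^{\pm1}$. *)

(* Defs.v *)
From mathcomp Require Import all_boot.
Set Implicit Arguments. Unset Strict Implicit. Unset Printing Implicit Defensive.

Section FreeGroup.
Variable A : finType.

(* Index set A ⊔ B: inl a = a (i.e. generator a_1), inr false = b_1, inr true = b_2. *)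
Definition Y := (A + bool)%type.
(* A letter is a generator together with an exponent flag: (x, false) = x, (x, true) = x^{-1}. *)
Definition letter := (Y * bool)%type.
Definition word := seq letter.

Definition linv (x : letter) : letter := (x.1, ~~ x.2).
Definition winv (w : word) : word := rev (map linv w).

(* reduced words = elements of F *)
Definition reducedw (w : word) : bool := sorted (fun x y => y != linv x) w.

Definition cons_red (x : letter) (w : word) : word :=
  match w with
  | y :: w' => if y == linv x then w' else x :: w
  | [::] => [:: x]
  end.
Definition reduce (w : word) : word := foldr cons_red [::] w.

Definition fmul (u v : word) : word := reduce (u ++ v).

Definition subst_hom (f : Y -> word) (w : word) : word :=
  reduce (flatten (map (fun x => if x.2 then winv (f x.1) else f x.1) w)).

Definition b1 : letter := (inr false, false).
Definition b2 : letter := (inr true, false).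

Definition Dconst : nat := 4 * #|A| * (#|A| + 2).

Definition vword (eta : Y * A -> nat) (y : Y) (a : A) : word :=
  let k := eta (y, a) in
  nseq k b1 ++ flatten (nseq (Dconst - 2 * k) [:: b2; b1]) ++ nseq k b2.

Definition psi (eta : Y * A -> nat) (y : Y) : word -> word :=
  subst_hom (fun z => match z with
                      | inl a => vword eta y a ++ [:: (inl a, false)]
                      | inr _ => [:: (z, false)]
                      end).

Definition psi_inv (eta : Y * A -> nat) (y : Y) : word -> word :=
  subst_hom (fun z => match z with
                      | inl a => winv (vword eta y a) ++ [:: (inl a, false)]
                      | inr _ => [:: (z, false)]
                      end).

Definition u_y (y : Y) : word := [:: (y, true)].

(* w . theta_y^e ; rule = (y, e) with e = false for theta_y, e = true for theta_y^{-1} *)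
Definition apply_rule (eta : Y * A -> nat) (r : Y * bool) (w : word) : word :=
  let y := r.1 in
  if r.2 then psi_inv eta y (fmul w (winv (u_y y)))
  else fmul (psi eta y w) (u_y y).

Definition inv_rule (r : Y * bool) : Y * bool := (r.1, ~~ r.2).

Definition countA (w : word) : nat := count (fun x : letter => if x.1 is inl _ then true else false) w.

End FreeGroup.

(* Main.v *)
Require Import Defs.
From mathcomp Require Import all_boot zify.
From Stdlib Require Import Lia.
Set Implicit Arguments. Unset Strict Implicit. Unset Printing Implicit Defensive.

Section S.
Variable A : finType.
Implicit Types (w u v s t P Q T : word A) (x y z : letter A).

Definition isA x : bool := if x.1 is inl _ then true else false.

Lemma linvK x : linv (linv x) = x.
Proof. by case: x => a b; rewrite /linv /= negbK. Qed.

Lemma linv_eq x y : (linv x == y) = (x == linv y).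
Proof. by apply/eqP/eqP => [<-|->]; rewrite linvK. Qed.

Lemma isA_linv x : isA (linv x) = isA x.
Proof. by case: x. Qed.

Lemma winv_cat s t : winv (s ++ t) = winv t ++ winv s.
Proof. by rewrite /winv map_cat rev_cat. Qed.

Lemma winv_cons x s : winv (x :: s) = winv s ++ [:: linv x].
Proof. by rewrite /winv /= rev_cons -cats1. Qed.

Lemma winv1 x : winv [:: x] = [:: linv x].
Proof. by []. Qed.

Lemma winv0 : winv [::] = [::] :> word A.
Proof. by []. Qed.

Lemma winvK s : winv (winv s) = s.
Proof. elim: s => // x s IH. by rewrite winv_cons winv_cat IH winv1 linvK. Qed.

Lemma winv_nseq n x : winv (nseq n x) = nseq n (linv x).
Proof. by rewrite /winv map_nseq rev_nseq. Qed.

Lemma all_winv (p : pred (letter A)) s : all p (winv s) = all (fun x => p (linv x)) s.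
Proof. by rewrite /winv all_rev all_map. Qed.

Lemma countA_cat s t : countA (s ++ t) = countA s + countA t.
Proof. by rewrite /countA count_cat. Qed.

Lemma countA_cons x s : countA (x :: s) = isA x + countA s.
Proof. by []. Qed.

Lemma countA_winv s : countA (winv s) = countA s.
Proof. rewrite /countA /winv count_rev count_map. by apply: eq_count => -[[a|b] e]. Qed.

Definition R x y : bool := y != linv x.

Lemma reduced_split s x t :
  reducedw (s ++ x :: t) = reducedw (s ++ [:: x]) && reducedw (x :: t).
Proof.
case: s => [|z s] /=; first by [].
rewrite /reducedw /= !cat_path /= andbT -andbA. by [].
Qed.

Lemma reduced_catl s t : reducedw (s ++ t) -> reducedw s.
Proof. case: s => // z s; rewrite /reducedw /= cat_path => /andP[] //. Qed.

Lemma reduced_catr s t : reducedw (s ++ t) -> reducedw t.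
Proof. elim: s => // z s IH /= H. apply: IH. exact: (path_sorted H). Qed.

Lemma reduced_tail x s : reducedw (x :: s) -> reducedw s.
Proof. exact: path_sorted. Qed.

Lemma reduced_pair x y : reducedw [:: x; y] = (y != linv x).
Proof. by rewrite /reducedw /= andbT. Qed.

Lemma reduced_sign (sg : bool) s : all (fun x => x.2 == sg) s -> reducedw s.
Proof.
elim: s => // x s IH /= /andP[Hx Hs].
case: s IH Hs => // z s IH /= /andP[Hz Hs].
rewrite /reducedw /=. apply/andP; split; last by have := IH; rewrite /= Hz Hs; apply.
apply/eqP => E. clear IH Hs. move: Hz; rewrite E /linv /=. by move/eqP: Hx => ->; case: sg.
Qed.

Lemma cons_red_reduced x s : reducedw s -> reducedw (cons_red x s).
Proof.
case: s => [|y s] //= H. case: eqP => E; first exact: (path_sorted H).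
rewrite /reducedw /=; apply/andP; split => //. by apply/eqP.
Qed.

Lemma reduce_reduced w : reducedw (reduce w).
Proof. elim: w => //= x w IH; exact: cons_red_reduced. Qed.

Lemma foldr_reduced s u : reducedw s -> reducedw (foldr (@cons_red A) s u).
Proof. elim: u => //= x u IH H. exact: cons_red_reduced (IH H). Qed.

Lemma cons_red_id x s : reducedw (x :: s) -> cons_red x s = x :: s.
Proof. case: s => //= y s /andP[H _]. by rewrite (negbTE H). Qed.

Lemma reduce_id w : reducedw w -> reduce w = w.
Proof.
elim: w => //= x w IH H. rewrite IH; [exact: cons_red_id | exact: path_sorted H].
Qed.

Lemma reduce_cat u v : reduce (u ++ v) = foldr (@cons_red A) (reduce v) u.
Proof. by rewrite /reduce foldr_cat. Qed.

Lemma cons_red_inv x s : reducedw s -> cons_red x (cons_red (linv x) s) = s.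
Proof.
case: s => [|y s] /= H; first by rewrite eqxx.
rewrite linvK. case: eqP => [<-|Hy] /=.
  case: s H => [|z s] //= /andP[H1 _]. by rewrite (negbTE H1).
by rewrite eqxx.
Qed.

Lemma foldr_red s u : reducedw s -> foldr (@cons_red A) s u = foldr (@cons_red A) s (reduce u).
Proof.
elim: u => //= x u IH Hs. rewrite IH //.
have := reduce_reduced u. case: (reduce u) => [|z r] //= Hr.
case: eqP => [->|Hz] /=; last by [].
by rewrite cons_red_inv // foldr_reduced.
Qed.

Lemma reduce_catl u v : reduce (u ++ v) = reduce (reduce u ++ v).
Proof. by rewrite !reduce_cat -foldr_red // reduce_reduced. Qed.

Lemma reduce_catr u v : reduce (u ++ v) = reduce (u ++ reduce v).
Proof. by rewrite !reduce_cat (reduce_id (reduce_reduced v)). Qed.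

Lemma reduce_cancel u S v : reduce (u ++ S ++ winv S ++ v) = reduce (u ++ v).
Proof.
elim: S u v => [|x S IH] u v; first by [].
rewrite winv_cons.
have -> : u ++ (x :: S) ++ (winv S ++ [:: linv x]) ++ v =
          (u ++ [:: x]) ++ S ++ winv S ++ (linv x :: v) by rewrite -!catA.
rewrite IH -catA /= !reduce_cat /= cons_red_inv //.
exact: reduce_reduced.
Qed.

Lemma reduce_rcons Z y : reducedw Z ->
  (reducedw (Z ++ [:: y]) /\ reduce (Z ++ [:: y]) = Z ++ [:: y]) \/
  (exists Z', Z = Z' ++ [:: linv y] /\ reduce (Z ++ [:: y]) = Z').
Proof.
case/lastP: Z => [|Z z] H; first by left.
rewrite -cats1 in H *.
case: (z =P linv y) => [->|Hz].
  right; exists Z; split => //.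
  rewrite -catA /=. have := reduce_cancel Z [:: linv y] [::].
  rewrite winv1 linvK /= cats0 => ->. exact: reduce_id (reduced_catl H).
left. have Hr : reducedw ((Z ++ [:: z]) ++ [:: y]).
  rewrite -catA /= reduced_split H reduced_pair.
  by apply/negP => /eqP E; apply: Hz; rewrite E linvK.
by split => //; rewrite reduce_id.
Qed.

Lemma keep_prefix P B y : reducedw (P ++ B) -> B <> [::] ->
  exists B', reduce (P ++ B ++ [:: y]) = P ++ B'.
Proof.
move=> H HB. case: (reduce_rcons y H) => [[_ E]|[Z' [E1 E2]]].
  by exists (B ++ [:: y]); rewrite catA E -catA.
case/lastP: B H HB E1 E2 => // B b H _. rewrite -cats1 catA => E1.
move: E1; rewrite !cats1 => /rcons_inj [E3 _].
move=> E2; exists B; by rewrite -!rcons_cat E2 E3.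
Qed.

Lemma cons_red_all (p : pred (letter A)) x s : p x -> all p s -> all p (cons_red x s).
Proof. case: s => [|y s] /= Hx; first by rewrite Hx. case: eqP => _ /andP[Hy Hs] /=; by rewrite ?Hx ?Hy. Qed.

Lemma reduce_all (p : pred (letter A)) w : all p w -> all p (reduce w).
Proof. elim: w => //= x w IH /andP[Hx Hw]. exact: cons_red_all (IH Hw). Qed.

Lemma countA_cons_red x s : countA (cons_red x s) <= isA x + countA s.
Proof. case: s => [|y s] //=. case: eqP => _ //. lia. Qed.

Lemma countA_reduce w : countA (reduce w) <= countA w.
Proof.
elim: w => // x w IH. change (countA (cons_red x (reduce w)) <= countA (x :: w)).
apply: leq_trans (countA_cons_red _ _) _.
rewrite countA_cons leq_add2l. exact: IH.
Qed.


Definition isb x : bool := ~~ isA x.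
Definition img (f : Y A -> word A) x : word A := if x.2 then winv (f x.1) else f x.1.
Definition flatw (f : Y A -> word A) w : word A := flatten (map (img f) w).

Lemma substE f w : subst_hom f w = reduce (flatw f w).
Proof. by []. Qed.

Lemma flatw_cat f u v : flatw f (u ++ v) = flatw f u ++ flatw f v.
Proof. by rewrite /flatw map_cat flatten_cat. Qed.

Lemma flatw_cons f x u : flatw f (x :: u) = img f x ++ flatw f u.
Proof. by []. Qed.

Lemma img_linv f x : img f (linv x) = winv (img f x).
Proof. by case: x => y [] /=; rewrite /img /= ?winvK. Qed.

Lemma subst_cat f u v : subst_hom f (u ++ v) = reduce (subst_hom f u ++ subst_hom f v).
Proof. by rewrite !substE flatw_cat reduce_catl reduce_catr. Qed.

Lemma subst_cons f x u : subst_hom f (x :: u) = reduce (img f x ++ subst_hom f u).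
Proof. by rewrite !substE flatw_cons reduce_catr. Qed.

Lemma subst_reduced f u : reducedw (subst_hom f u).
Proof. exact: reduce_reduced. Qed.

Lemma subst_reduce f u : subst_hom f (reduce u) = subst_hom f u.
Proof.
elim: u => // x u IH. change (subst_hom f (cons_red x (reduce u)) = subst_hom f (x :: u)).
rewrite (subst_cons f x u) -IH.
have := reduce_reduced u. case: (reduce u) => [|z r] Hr /=.
  by rewrite subst_cons.
case: eqP => [->|Hz]; last by rewrite subst_cons.
rewrite subst_cons -reduce_catr img_linv.
have := reduce_cancel [::] (img f x) (subst_hom f r). rewrite /= => ->.
by rewrite reduce_id // subst_reduced.
Qed.

Definition goodf (beta : A -> word A) : Y A -> word A :=
  fun yy : Y A => match yy with
           | inl a => beta a ++ [:: (inl a, false)]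
           | inr _ => [:: (yy, false)]
           end.

Definition bword w := all isb w.

Lemma bword_winv w : bword (winv w) = bword w.
Proof. rewrite /bword all_winv. by apply: eq_all => -[[a|b] e]. Qed.

Lemma bword_reduce w : bword w -> bword (reduce w).
Proof. exact: reduce_all. Qed.

Lemma bword_cat u v : bword (u ++ v) = bword u && bword v.
Proof. exact: all_cat. Qed.

Lemma flatw_b beta T : bword T -> flatw (goodf beta) T = T.
Proof.
elim: T => // -[[a|b] e] T IH H; first by rewrite /bword /= in H.
move: H; rewrite /bword /= => HT.
rewrite flatw_cons IH //. by case: e.
Qed.

Lemma subst_b beta T : bword T -> reducedw T -> subst_hom (goodf beta) T = T.
Proof. move=> Hb Hr. by rewrite substE flatw_b // reduce_id. Qed.

Lemma countA_b T : bword T -> countA T = 0.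
Proof.
elim: T => // -[[a|b] e] T IH H; first by rewrite /bword /= in H.
case/andP: H => _ HT. by rewrite countA_cons IH.
Qed.

Section Good.
Variable beta : A -> word A.
Hypothesis Hbeta : forall a, bword (beta a).
Let f := goodf beta.
Let g := goodf (fun a => winv (beta a)).

Lemma Hbeta' a : bword (winv (beta a)).
Proof. by rewrite bword_winv. Qed.

Lemma subst_img x : subst_hom g (img f x) = [:: x].
Proof.
case: x => -[a|b] [] /=; rewrite /img /= /f /g /goodf.
- rewrite winv_cat winv1 /= substE flatw_cons flatw_b ?Hbeta' //.
  rewrite /img /= winv_cat winvK winv1 /=.
  have := reduce_cancel [:: (inl a, true)] (beta a) [::]. rewrite !cats0 /= => ->. by [].
- rewrite substE flatw_cat flatw_b // /flatw /= /img /= cats0.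
  have := reduce_cancel [::] (beta a) [:: (inl a, false)]. rewrite /= => ->. by [].
- by [].
- by [].
Qed.

Lemma subst_inv w : reducedw w -> subst_hom g (subst_hom f w) = w.
Proof.
elim: w => // x w IH Hw.
rewrite subst_cons subst_reduce subst_cat subst_img IH ?(reduced_tail Hw) //.
exact: reduce_id.
Qed.

Lemma countA_img x : countA (img f x) = isA x.
Proof.
case: x => -[a|b] [] //=; rewrite /img /f /goodf /= ?countA_winv countA_cat countA_b //.
Qed.

Lemma countA_flat w : countA (flatw f w) = countA w.
Proof. elim: w => // x w IH. by rewrite flatw_cons countA_cat IH countA_img. Qed.

Lemma countA_subst_le w : countA (subst_hom f w) <= countA w.
Proof. rewrite substE -(countA_flat w). exact: countA_reduce. Qed.

End Good.

Lemma countA_subst beta w : (forall a, bword (beta a)) -> reducedw w ->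
  countA (subst_hom (goodf beta) w) = countA w.
Proof.
move=> Hb Hw. apply/eqP; rewrite eqn_leq countA_subst_le //=.
rewrite -{1}(subst_inv Hb Hw). apply: countA_subst_le. exact: Hbeta'.
Qed.


Lemma subst_ext f f' w : f =1 f' -> subst_hom f w = subst_hom f' w.
Proof.
move=> E. rewrite !substE /flatw. congr (reduce (flatten _)).
apply: eq_map => x. by rewrite /img E.
Qed.

Lemma goodf_ext beta beta' : beta =1 beta' -> goodf beta =1 goodf beta'.
Proof. by move=> E [a|b] //=; rewrite E. Qed.

Lemma reduced_A_b x T : isA x -> bword T -> reducedw T -> reducedw (x :: T).
Proof.
case: T => // r T Hx /andP[Hr _] HT. rewrite /reducedw /=. apply/andP; split => //.
apply/eqP => E. by move: Hr; rewrite E /isb isA_linv Hx.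
Qed.

Lemma RX P x Y : reducedw (P ++ [:: x]) -> isA x -> bword Y ->
  reduce (P ++ x :: Y) = P ++ x :: reduce Y.
Proof.
move=> H Hx HY. rewrite (_ : P ++ x :: Y = (P ++ [:: x]) ++ Y); last by rewrite -catA.
rewrite reduce_catr -catA /=. apply: reduce_id.
rewrite reduced_split H /=. apply: reduced_A_b => //.
  exact: bword_reduce. exact: reduce_reduced.
Qed.

Section Good2.
Variable beta : A -> word A.
Hypothesis Hbeta : forall a, bword (beta a).

Lemma SL P c : reducedw (P ++ [:: (inl c, false)]) ->
  exists P', subst_hom (goodf beta) (P ++ [:: (inl c, false)]) = P' ++ [:: (inl c, false)].
Proof.
move=> HP. set c' : letter A := (inl c, false).
have E : subst_hom (goodf beta) (P ++ [:: c']) =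
         reduce (reduce (flatw (goodf beta) P ++ beta c) ++ [:: c']).
  by rewrite substE flatw_cat /flatw /= /img /= cats0 catA reduce_catl.
case: (reduce_rcons c' (reduce_reduced (flatw (goodf beta) P ++ beta c))) =>
  [[_ E2]|[Z' [E1 E2]]].
  by exists (reduce (flatw (goodf beta) P ++ beta c)); rewrite E E2.
exfalso.
have C1 := countA_subst Hbeta HP. rewrite E E2 countA_cat /= in C1.
have C2 := countA_reduce (flatw (goodf beta) P ++ beta c).
rewrite E1 !countA_cat countA_flat // (countA_b (Hbeta c)) /= in C2.
move: C1 C2. rewrite /countA /=. lia.
Qed.

End Good2.

Lemma SLc beta P Z c : (forall a, bword (beta a)) -> reducedw P ->
  subst_hom (goodf beta) P = Z ++ [:: (inl c, false)] ->
  exists P0, P = P0 ++ [:: (inl c, false)].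
Proof.
move=> Hbeta HP E.
have Hb' : forall a, bword (winv (beta a)) by move=> a; rewrite bword_winv.
rewrite -(subst_inv Hbeta HP) E.
have HZ : reducedw (Z ++ [:: (inl c, false)]) by rewrite -E; exact: subst_reduced.
have [P' EP] := SL Hb' HZ. by exists P'.
Qed.

Lemma Lpos beta P c T : (forall a, bword (beta a)) ->
  reducedw (P ++ (inl c, false) :: T) -> bword T ->
  exists P', subst_hom (goodf beta) (P ++ (inl c, false) :: T) = P' ++ (inl c, false) :: T.
Proof.
move=> Hbeta H HT. move: (H); rewrite reduced_split => /andP[H1 H2].
have HTr := reduced_tail H2.
have [P' E] := SL Hbeta H1. exists P'.
rewrite (_ : P ++ _ :: T = (P ++ [:: (inl c, false)]) ++ T); last by rewrite -catA.
rewrite subst_cat E subst_b // -catA /=. apply: reduce_id.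
by rewrite reduced_split H2 -E subst_reduced.
Qed.

Lemma Lneg beta P c T : (forall a, bword (beta a)) ->
  reducedw (P ++ (inl c, true) :: T) -> bword T ->
  subst_hom (goodf beta) (P ++ (inl c, true) :: T) =
  subst_hom (goodf beta) P ++ (inl c, true) :: reduce (winv (beta c) ++ T).
Proof.
move=> Hbeta H HT.
rewrite substE flatw_cat flatw_cons (flatw_b _ HT) {1}/img /= winv_cat winv1 /=.
rewrite reduce_catl -substE.
set X := subst_hom (goodf beta) P.
rewrite (_ : X ++ _ :: _ = (X ++ [:: (inl c, true)]) ++ (winv (beta c) ++ T)); last by rewrite -catA.
rewrite reduce_catr -catA /=. apply: reduce_id. rewrite reduced_split. apply/andP; split.
  have : reducedw X by exact: subst_reduced.
  case/lastP E: X => [|Z z] // HX. rewrite -cats1 in HX E.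
  rewrite -cats1 -catA /= reduced_split HX /= andbT. apply/negP => /eqP Ez.
  have Ez' : z = (inl c, false) by rewrite -(linvK z) -Ez.
  rewrite Ez' in E.
  have HP : reducedw P by move: H; rewrite reduced_split => /andP[/reduced_catl].
  have [P0 EP] := SLc Hbeta HP E.
  move: H; rewrite EP -catA /= reduced_split => /andP[_].
  by rewrite /reducedw /= eqxx.
apply: reduced_A_b => //; last exact: reduce_reduced.
apply: bword_reduce. by rewrite bword_cat bword_winv Hbeta.
Qed.


Lemma reduced_cat_sign (sg : bool) s t :
  reducedw s -> reducedw t -> all (fun x => x.2 == sg) s ->
  (if t is h :: _ then h.2 == sg else true) -> reducedw (s ++ t).
Proof.
case/lastP: s => [|s l] // Hs; case: t => [|h t] Ht Hsg Hh; first by rewrite cats0.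
rewrite -cats1 in Hs Hsg. rewrite -cats1 -catA /= reduced_split Hs /=.
apply/andP; split; last exact: Ht. apply/eqP => E.
move: Hsg; rewrite all_cat /= andbT => /andP[_ Hl]. move: Hh; rewrite E /linv /= (eqP Hl).
by case: sg {Hl}.
Qed.

Lemma linv_inj : injective (@linv A).
Proof. by move=> x y E; rewrite -(linvK x) E linvK. Qed.

Lemma tail_gen (sg : bool) (p q r s : letter A) (M : word A) k y T :
  all (fun x => x.2 == sg) (nseq k p ++ q :: M ++ r :: nseq k s) ->
  s != r ->
  [\/ T = [::],
      (exists (t : letter A) T', [/\ T = t :: T', t.2 == sg & reducedw T]) |
      (exists k0 R, [/\ k0 != k, T = nseq k0 (linv s) ++ linv r :: R & reducedw T])] ->
  exists R', reduce ((nseq k p ++ q :: M ++ r :: nseq k s) ++ T ++ [:: y]) = nseq k p ++ q :: R'.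
Proof.
set V := nseq k p ++ _. move=> Hsg Hsr HT.
have HV : reducedw V := reduced_sign Hsg.
have EV : V = (nseq k p ++ [:: q]) ++ (M ++ r :: nseq k s) by rewrite /V -catA.
have fin : forall B', exists R', (nseq k p ++ [:: q]) ++ B' = nseq k p ++ q :: R'.
  by move=> B'; exists B'; rewrite -catA.
case: HT => [->|[t [T' [ET Ht HTr]]]|[k0 [R [Hk ET HTr]]]].
- have H0 : reducedw ((nseq k p ++ [:: q]) ++ (M ++ r :: nseq k s)) by rewrite -EV.
  rewrite /= EV -catA.
  have [B' ->] := keep_prefix y H0 ltac:(by case: M {V Hsg HV EV H0}).
  exact: fin.
- have H2 : reducedw (V ++ T) by apply: (reduced_cat_sign HV HTr Hsg); rewrite ET.
  rewrite catA.
  have H3 : V ++ T = (nseq k p ++ [:: q]) ++ ((M ++ r :: nseq k s) ++ T) by rewrite EV -!catA.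
  rewrite H3 in H2. rewrite H3 -catA.
  have [B' ->] := keep_prefix y H2 ltac:(by case: M {V Hsg HV EV H3 H2}).
  exact: fin.
- case: (ltngtP k k0) => Hkk; last by rewrite Hkk eqxx in Hk.
  + have [d Ed] : exists d, k0 = k + d.+1 by exists (k0 - k).-1; lia.
    rewrite Ed nseqD in ET.
    set Z := nseq d.+1 (linv s) ++ linv r :: R.
    have E1 : V ++ T ++ [:: y] = (nseq k p ++ q :: M ++ [:: r]) ++ nseq k s ++
                winv (nseq k s) ++ (Z ++ [:: y]).
      by rewrite ET winv_nseq /V /Z -!catA /= -!catA.
    rewrite E1 reduce_cancel.
    have HZ : reducedw Z by move: HTr; rewrite ET /Z -catA => /reduced_catr.
    have HV0 : reducedw (nseq k p ++ q :: M ++ [:: r]).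
      have EV2 : V = (nseq k p ++ q :: M ++ [:: r]) ++ nseq k s by rewrite /V -!catA /= -!catA.
      by move: HV; rewrite EV2 => /reduced_catl.
    have H4 : reducedw ((nseq k p ++ q :: M ++ [:: r]) ++ Z).
      rewrite /Z /= (_ : nseq k p ++ q :: M ++ [:: r] = (nseq k p ++ q :: M) ++ [:: r]); last by rewrite -catA.
      rewrite -catA /= reduced_split -catA /= HV0 /=.
      apply/andP; split; last exact: HZ.
      apply/negP => /eqP /linv_inj E. by rewrite E eqxx in Hsr.
    have H5 : (nseq k p ++ q :: M ++ [:: r]) ++ Z = (nseq k p ++ [:: q]) ++ ((M ++ [:: r]) ++ Z)
      by rewrite -!catA /= -!catA.
    rewrite H5 in H4. rewrite catA H5 -catA.
    have [B' ->] := keep_prefix y H4 ltac:(by case: M {V Hsg HV EV H5 H4 E1 HV0}).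
    exact: fin.
  + have [d Ed] : exists d, k = k0 + d.+1 by exists (k - k0).-1; lia.
    set V1 := nseq k p ++ q :: M ++ r :: nseq d.+1 s.
    have E1 : V ++ T ++ [:: y] = V1 ++ nseq k0 s ++ winv (nseq k0 s) ++ (linv r :: R ++ [:: y]).
      by rewrite ET winv_nseq /V /V1 {2}Ed addnC nseqD -!catA /= -?catA /= -?catA.
    rewrite E1 reduce_cancel.
    have HR : reducedw (linv r :: R) by move: HTr; rewrite ET => /reduced_catr.
    have HV1 : reducedw V1.
      have EV2 : V = V1 ++ nseq k0 s.
        by rewrite /V /V1 {2}Ed addnC nseqD -!catA /= -?catA /= -?catA.
      by move: HV; rewrite EV2 => /reduced_catl.
    have H4 : reducedw (V1 ++ linv r :: R).
      have EV1 : V1 = (nseq k p ++ q :: M ++ r :: nseq d s) ++ [:: s].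
        have Ens : nseq d.+1 s = nseq d s ++ [:: s] by rewrite -addn1 nseqD.
        by rewrite /V1 Ens -!catA /= -?catA /= -?catA.
      rewrite EV1 -catA /= reduced_split -EV1 HV1 /=.
      apply/andP; split; last exact: HR.
      apply/negP => /eqP /linv_inj E. by rewrite E eqxx in Hsr.
    have H5 : V1 ++ linv r :: R = (nseq k p ++ [:: q]) ++ ((M ++ r :: nseq d.+1 s) ++ linv r :: R)
      by rewrite /V1 -!catA /= -?catA /= -?catA.
    rewrite H5 in H4. rewrite (_ : V1 ++ linv r :: R ++ [:: y] = (V1 ++ linv r :: R) ++ [:: y]); last by rewrite -catA.
    rewrite H5 -catA.
    have [B' ->] := keep_prefix y H4 ltac:(by case: M {V Hsg HV EV H5 H4 E1 HV1 V1}).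
    exact: fin.
Qed.


Lemma b_count Z y : reducedw Z -> isb y -> countA (reduce (Z ++ [:: y])) = countA Z.
Proof.
move=> HZ Hy.
have H1 : bword [:: y] by rewrite /bword /= andbT.
have H2 : bword [:: linv y] by rewrite /bword /= andbT /isb isA_linv.
case: (reduce_rcons y HZ) => [[_ ->]|[Z' [E1 ->]]].
  by rewrite countA_cat (countA_b H1) addn0.
by rewrite E1 countA_cat (countA_b H2) addn0.
Qed.

Lemma posapp Q (c : A) T y : reducedw (Q ++ (inl c, false) :: T) -> isb y ->
  (forall T0 (t : letter A), T = T0 ++ [:: t] -> t != linv y) ->
  reduce (Q ++ (inl c, false) :: T ++ [:: y]) = Q ++ (inl c, false) :: (T ++ [:: y]).
Proof.
move=> H Hy HT. rewrite (_ : Q ++ _ :: T ++ _ = (Q ++ (inl c, false) :: T) ++ [:: y]); last by rewrite -catA.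
case: (reduce_rcons y H) => [[_ ->]|[Z' [E1 E2]]]; first by rewrite -catA.
exfalso. case/lastP: T HT E1 {H E2} => [|T t] HT.
  rewrite !cats1 => /rcons_inj /(congr1 snd) /= E. by move: Hy; rewrite -(linvK y) -E.
rewrite -rcons_cons -rcons_cat cats1 => /rcons_inj /(congr1 snd) /= E.
by move: (HT T t (esym (cats1 _ _))); rewrite E eqxx.
Qed.

Variable eta : Y A * A -> nat.
Hypothesis eta_inj : injective eta.
Hypothesis eta_range : forall p, 1 <= eta p <= Dconst A %/ 4.
Hypothesis hA : 0 < #|A|.

Definition ptail k (e : bool) : word A :=
  if e then nseq k (b1 A) ++ [:: b2 A] else nseq k (linv (b2 A)) ++ [:: linv (b1 A)].

Definition Inv w (r : Y A * bool) : Prop :=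
  reducedw w /\ exists Q (c : A) (s : bool) T,
    [/\ w = Q ++ (inl c, s) :: T, bword T &
      match r with
      | (inl c', e) => [/\ T = [::], c = c' & s = ~~ e]
      | (inr b, e) => if s then exists R, T = ptail (eta (inr b, c)) e ++ R
                      else exists T0, T = T0 ++ [:: (inr b, ~~ e)]
      end].

Lemma m_pos p : 0 < Dconst A - 2 * eta p.
Proof.
have := eta_range p. rewrite /Dconst -mulnA mulKn //.
have : 0 < #|A| * (#|A| + 2) by rewrite muln_gt0 hA addn_gt0 orbT.
lia.
Qed.

Lemma flat_shape m : exists M : word A,
  flatten (nseq m.+1 [:: b2 A; b1 A]) = b2 A :: M ++ [:: b1 A].
Proof.
elim: m => [|m [M IH]]; first by exists [::].
exists [:: b1 A, b2 A & M].
by rewrite (_ : flatten (nseq m.+2 [:: b2 A; b1 A]) = [:: b2 A; b1 A] ++ flatten (nseq m.+1 [:: b2 A; b1 A])) // IH.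
Qed.

Lemma vshape (y : Y A) (a : A) : exists M : word A,
  vword eta y a = nseq (eta (y, a)) (b1 A) ++ b2 A :: M ++ b1 A :: nseq (eta (y, a)) (b2 A)
  /\ all (fun x => x.2 == false) M.
Proof.
have Hm := m_pos (y, a).
have [m Em] : exists m, Dconst A - 2 * eta (y, a) = m.+1 by exists (Dconst A - 2 * eta (y, a)).-1; lia.
have [M EM] := flat_shape m.
have HM : all (fun x => x.2 == false) (flatten (nseq m.+1 [:: b2 A; b1 A])).
  move: (m.+1) => n0. elim: n0 => // n IH.
exists M; split.
  by rewrite /vword Em EM /= -catA.
by move: HM; rewrite EM /= all_cat => /andP[].
Qed.

Lemma vword_sign (y : Y A) (a : A) : all (fun x => x.2 == false) (vword eta y a).
Proof.
have [M [-> HM]] := vshape y a.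
by rewrite all_cat all_nseq /= all_cat HM /= all_nseq /= !orbT.
Qed.

Lemma vword_b (y : Y A) (a : A) : bword (vword eta y a).
Proof. rewrite /vword /bword !all_cat !all_nseq /= !orbT /=.
elim: (Dconst A - _) => // n IH.
Qed.

Lemma vwinv_b (y : Y A) (a : A) : bword (winv (vword eta y a)).
Proof. by rewrite bword_winv vword_b. Qed.

Lemma psiE (y : Y A) : psi eta y = subst_hom (goodf (vword eta y)).
Proof. by []. Qed.

Lemma psi_invE (y : Y A) : psi_inv eta y = subst_hom (goodf (fun a => winv (vword eta y a))).
Proof. by []. Qed.

Lemma apply_fwd (y : Y A) w : apply_rule eta (y, false) w = reduce (psi eta y w ++ [:: (y, true)]).
Proof. by []. Qed.

Lemma apply_inv (y : Y A) w : apply_rule eta (y, true) w = psi_inv eta y (reduce (w ++ [:: (y, false)])).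
Proof. by []. Qed.

Lemma apply_reduced r w : reducedw (apply_rule eta r w).
Proof. case: r => y [] /=; [rewrite apply_inv psi_invE | rewrite apply_fwd]; exact: reduce_reduced. Qed.


Definition pl (e : bool) : letter A := if e then b1 A else linv (b2 A).
Definition ql (e : bool) : letter A := if e then b2 A else linv (b1 A).
Definition Vw (e : bool) (y : Y A) (c : A) : word A :=
  if e then vword eta y c else winv (vword eta y c).

Lemma ptailE k e : ptail k e = nseq k (pl e) ++ [:: ql e].
Proof. by case: e. Qed.

Lemma ptailN k e : ptail k (~~ e) = nseq k (linv (ql e)) ++ [:: linv (pl e)].
Proof. by case: e. Qed.

Lemma qp e : ql e != pl e.
Proof. by case: e. Qed.

Lemma Vshape e (y : Y A) (c : A) : exists M : word A, Vw e y c = nseq (eta (y, c)) (pl e) ++ ql e :: M ++ pl e :: nseq (eta (y, c)) (ql e)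
  /\ all (fun x => x.2 == ~~ e) (Vw e y c).
Proof.
have [M [EM HM]] := vshape y c. have Hs := vword_sign y c.
case: e; rewrite /Vw.
  by exists M; split.
exists (winv M); split; last by rewrite all_winv; apply: sub_all Hs => -[z []].
rewrite EM !winv_cat !winv_cons !winv_cat !winv_nseq ?winv1 -!catA /= -?catA /=.
by rewrite winv_cons winv_nseq -catA.
Qed.

Lemma Vw_b e (y : Y A) (c : A) : bword (Vw e y c).
Proof. by case: e; rewrite /Vw ?vwinv_b ?vword_b. Qed.

Lemma afwd d w : reducedw w ->
  (countA (apply_rule eta (inl d, false) w) = (countA w).+1 /\
     Inv (apply_rule eta (inl d, false) w) (inl d, false)) \/
  (countA (apply_rule eta (inl d, false) w) < countA w /\ exists P0, w = P0 ++ [:: (inl d, false)]).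
Proof.
move=> Hw. rewrite apply_fwd psiE.
have Hb := vword_b (inl d).
have Cz := countA_subst Hb Hw.
case: (reduce_rcons (inl d, true) (subst_reduced (goodf (vword eta (inl d))) w)) => [[HZ ->]|[Z' [E1 ->]]].
  left. split; first by rewrite countA_cat Cz addn1.
  split; first by []. exists (subst_hom (goodf (vword eta (inl d))) w), d, true, [::]. by split.
right. split.
  have : countA (subst_hom (goodf (vword eta (inl d))) w) = countA Z' + 1 by rewrite E1 countA_cat.
  lia.
exact: SLc Hb Hw E1.
Qed.

Lemma ainv d w : reducedw w ->
  (countA (apply_rule eta (inl d, true) w) = (countA w).+1 /\
     Inv (apply_rule eta (inl d, true) w) (inl d, true)) \/
  (countA (apply_rule eta (inl d, true) w) < countA w /\ exists P0, w = P0 ++ [:: (inl d, true)]).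
Proof.
move=> Hw. rewrite apply_inv psi_invE.
have Hb := vwinv_b (inl d).
case: (reduce_rcons (inl d, false) Hw) => [[Hw1 ->]|[Z' [E1 ->]]].
  left. have [P' EP] := SL Hb Hw1.
  rewrite countA_subst // countA_cat addn1. split => //.
  split; first exact: subst_reduced. exists P', d, false, [::]. by split.
right. have HZ : reducedw Z' by move: Hw; rewrite E1 => /reduced_catl.
rewrite countA_subst // E1 countA_cat /=. split; first by rewrite addn1.
by exists Z'.
Qed.

Lemma Inv_last w r d (sg : bool) P0 : Inv w r -> w = P0 ++ [:: (inl d, sg)] -> r = (inl d, ~~ sg).
Proof.
case=> _ [Q [c [s [T [Ew HT Hc]]]]] E. rewrite Ew in E.
case/lastP: T Ew HT Hc E => [|T t] Ew HT Hc E.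
  move: E; rewrite !cats1 => /rcons_inj /(congr1 snd) /= -[Ec Es]. subst c s.
  case: r Hc => [[c'|b] e] /=; first by case=> _ -> ->; rewrite negbK.
  by case: (sg) => -[R]; [rewrite ptailE; case: (eta _) | case: R].
exfalso. move: E; rewrite -rcons_cons -rcons_cat cats1 => /rcons_inj /(congr1 snd) /= Et.
by move: HT; rewrite /bword -cats1 all_cat /= Et andbF.
Qed.

Lemma bcount w b e : reducedw w -> countA (apply_rule eta (inr b, e) w) = countA w.
Proof.
move=> Hw. case: e.
  rewrite apply_inv psi_invE (countA_subst (vwinv_b (inr b))) ?reduce_reduced //.
  exact: b_count.
rewrite apply_fwd psiE b_count ?subst_reduced //. exact: countA_subst (vword_b _) Hw.
Qed.


Lemma bneg_shape Q (c : A) T (b : bool) e : reducedw (Q ++ (inl c, true) :: T) -> bword T ->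
  exists Q', apply_rule eta (inr b, e) (Q ++ (inl c, true) :: T) =
     Q' ++ (inl c, true) :: reduce (Vw e (inr b) c ++ T ++ [:: (inr b, ~~ e)]).
Proof.
move=> Hw HT. have Hw1 : reducedw (Q ++ [:: (inl c, true)]) by move: Hw; rewrite reduced_split => /andP[].
have HTy : forall e', bword (T ++ [:: (inr b, e')]) by move=> e'; rewrite bword_cat HT.
case: e => /=.
- rewrite apply_inv psi_invE.
  rewrite (_ : (Q ++ _ :: T) ++ [:: (inr b, false)] = Q ++ (inl c, true) :: (T ++ [:: (inr b, false)])); last by rewrite -catA.
  rewrite RX //.
  have Hr : reducedw (Q ++ (inl c, true) :: reduce (T ++ [:: (inr b, false)])) by rewrite -RX ?reduce_reduced.
  rewrite Lneg //; last by apply: bword_reduce.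
    exists (subst_hom (goodf (fun a => winv (vword eta (inr b) a))) Q).
    by rewrite winvK -reduce_catr /Vw.
  exact: vwinv_b.
- rewrite apply_fwd psiE.
  have Hr := subst_reduced (goodf (vword eta (inr b))) (Q ++ (inl c, true) :: T).
  rewrite (Lneg (vword_b (inr b))) // in Hr *.
  set X := subst_hom _ Q. set R := reduce (winv _ ++ T).
  rewrite (_ : (X ++ (inl c, true) :: R) ++ [:: (inr b, true)] = X ++ (inl c, true) :: (R ++ [:: (inr b, true)])); last by rewrite -catA.
  have H1 : reducedw (X ++ [:: (inl c, true)]) by move: Hr; rewrite reduced_split => /andP[].
  have H2 : bword (R ++ [:: (inr b, true)]) by rewrite bword_cat bword_reduce // bword_cat vwinv_b.
  rewrite (RX H1 _ H2) //.
  exists X. by rewrite /R -reduce_catl -catA /Vw.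
Qed.

Lemma bpos_shape Q (c : A) T (b : bool) e : reducedw (Q ++ (inl c, false) :: T) -> bword T ->
  (forall T0 (t : letter A), T = T0 ++ [:: t] -> t != linv (inr b, ~~ e)) ->
  exists Q', apply_rule eta (inr b, e) (Q ++ (inl c, false) :: T) =
     Q' ++ (inl c, false) :: (T ++ [:: (inr b, ~~ e)]).
Proof.
move=> Hw HT HT0.
have HTy : forall e', bword (T ++ [:: (inr b, e')]) by move=> e'; rewrite bword_cat HT.
case: e HT0 => /= HT0.
- rewrite apply_inv psi_invE -catA /= posapp //.
  have Hr : reducedw (Q ++ (inl c, false) :: T ++ [:: (inr b, false)]) by rewrite -posapp ?reduce_reduced.
  have [P' EP] := Lpos (vwinv_b (inr b)) Hr (HTy false). by exists P'.
- rewrite apply_fwd psiE.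
  have [P' EP] := Lpos (vword_b (inr b)) Hw HT.
  rewrite EP -catA /= posapp //; first by exists P'.
  by rewrite -EP subst_reduced.
Qed.

Lemma bstep w r (b : bool) e : Inv w r -> (inr b, e) != inv_rule r ->
  Inv (apply_rule eta (inr b, e) w) (inr b, e).
Proof.
case=> Hw [Q [c [s [T [Ew HT Hc]]]]] Hne.
split; first exact: apply_reduced.
have HTr : reducedw T by move: Hw; rewrite Ew => /reduced_catr /reduced_tail.
case: s Ew Hc => Ew Hc; rewrite Ew in Hw *.
- have [Q' ->] := bneg_shape b e Hw HT.
  exists Q', c, true, (reduce (Vw e (inr b) c ++ T ++ [:: (inr b, ~~ e)])). split => //.
    apply: bword_reduce. by rewrite !bword_cat Vw_b HT.
  have [M [EM HM]] := Vshape e (inr b) c.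
  rewrite EM in HM *.
  have HT3 : [\/ T = [::],
      (exists (t : letter A) T', [/\ T = t :: T', t.2 == ~~ e & reducedw T]) |
      (exists k0 R, [/\ k0 != eta (inr b, c), T = nseq k0 (linv (ql e)) ++ linv (pl e) :: R & reducedw T])].
    case: r Hc Hne => [[c'|b0] e0] Hc Hne.
      by case: Hc => ->; constructor 1.
    case: Hc => R ER.
    case: (e0 =P e) => He.
      subst e0. constructor 2. rewrite ER ptailE in HTr *.
      case: (eta (inr b0, c)) HTr => [|k0] HTr /=; [exists (ql e) | exists (pl e)];
        (eexists; split; [reflexivity | by case: (e) | exact: HTr]).
    constructor 3. exists (eta (inr b0, c)), R. split => //.
      apply/eqP => /eta_inj [] Eb. subst b0.
      have He' : e0 = ~~ e by case: (e0) (e) He => -[].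
      by move: Hne; rewrite /inv_rule /= He' negbK eqxx.
    have He' : e0 = ~~ e by case: (e0) (e) He => -[].
    by rewrite ER He' ptailN -catA.
  have [R' ER'] := @tail_gen (~~ e) (pl e) (ql e) (pl e) (ql e) M (eta (inr b, c)) (inr b, ~~ e) T HM (qp e) HT3.
  exists R'. by rewrite ER' ptailE -catA.
- have HT0 : forall T0 (t : letter A), T = T0 ++ [:: t] -> t != linv (inr b, ~~ e).
    move=> T0 t ET. case: r Hc Hne => [[c'|b0] e0] Hc Hne.
      by case: Hc => ET'; move: ET; rewrite ET'; case: T0.
    case: Hc => T1 ET1. rewrite ET1 in ET. move: ET; rewrite !cats1 => /rcons_inj [_ <-].
    apply/eqP => -[Eb He]. by move: Hne; rewrite /inv_rule /= Eb He negbK eqxx.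
  have [Q' ->] := bpos_shape Hw HT HT0.
  exists Q', c, false, (T ++ [:: (inr b, ~~ e)]). split => //.
    by rewrite bword_cat HT.
  by exists T.
Qed.

Lemma step w r r' : Inv w r -> r' != inv_rule r ->
  countA w <= countA (apply_rule eta r' w) /\ Inv (apply_rule eta r' w) r'.
Proof.
move=> HI Hne. have Hw := HI.1.
case: r' Hne => [[d|b] e] Hne.
  case: e Hne => Hne.
    case: (ainv d Hw) => [[-> HI']|[_ [P0 E]]]; first by split.
    have Er := Inv_last HI E. by move: Hne; rewrite Er eqxx.
  case: (afwd d Hw) => [[-> HI']|[_ [P0 E]]]; first by split.
  have Er := Inv_last HI E. by move: Hne; rewrite Er eqxx.
split; first by rewrite bcount.
apply: (bstep HI). exact Hne.
Qed.

Lemma first w r : reducedw w -> countA w < countA (apply_rule eta r w) ->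
  Inv (apply_rule eta r w) r.
Proof.
move=> Hw. case: r => [[d|b] e].
  case: e.
    case: (ainv d Hw) => [[_ HI]|[C _]] // C'. by move: (ltn_trans C C'); rewrite ltnn.
  case: (afwd d Hw) => [[_ HI]|[C _]] // C'. by move: (ltn_trans C C'); rewrite ltnn.
by rewrite bcount // ltnn.
Qed.

End S.

Theorem lemma5p8 (A : finType) (hA : 0 < #|A|)
  (eta : Y A * A -> nat) (eta_inj : injective eta)
  (eta_range : forall p, 1 <= eta p <= Dconst A %/ 4)
  (eta_onto : forall k, 1 <= k <= Dconst A %/ 4 -> exists p, eta p = k)
  (t : nat) (w : nat -> word A) (h : nat -> Y A * bool)
  (hw0 : reducedw (w 0))
  (hcomp : forall i, 1 <= i <= t -> w i = apply_rule eta (h i) (w i.-1))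
  (hred : forall i, 1 <= i < t -> h i.+1 != inv_rule (h i))
  (hinc : countA (w 0) < countA (w 1)) :
  forall i, 1 <= i <= t -> countA (w i.-1) <= countA (w i).
Proof.
suff H : forall i, 1 <= i <= t -> Inv eta (w i) (h i) /\ countA (w i.-1) <= countA (w i).
  by move=> i Hi; case: (H i Hi).
elim=> [|i IH] // Hi.
have Hi' : i < t by case/andP: Hi.
case: i IH Hi Hi' => [|i] IH Hi Hi'.
  have E := hcomp 1 Hi. split; last exact: ltnW.
  rewrite E. apply: first => //. by rewrite -E.
have [HI _] := IH (ltnW Hi').
have E := hcomp i.+2 Hi. rewrite E /=.
have Hr : h i.+2 != inv_rule (h i.+1) by apply: hred; rewrite /= Hi'.
have [C I] := step eta_inj eta_range hA HI Hr. by split.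
Qed.
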